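(* For every $\lambda\in\Omega=\{\lambda\in\mathbb D:\ 0\le\mathrm{Re}(\lambda)\le|\lambda|^2-\tfrac12\}$ there exist $a>1$ and $b>2^{-1/2}$ such that $R_{a,b}\subset(\lambda R_{a,b}-1)\cup(\lambda R_{a,b}+1)$.
   Context: $\mathbb D$ is the open unit disc. For $a,b>0$, $R_{a,b}\subset\mathbb C$ is the closed rectangle centered at $0$ with vertices $\pm a\pm ib$; $\lambda E+c=\{\lambda z+c:z\in E\}$. *)

(* Defs.v *)
From Stdlib Require Import Reals.
From Coquelicot Require Import Coquelicot.
Open Scope R_scope.

Definition rect (a b : R) (z : C) : Prop :=
  Rabs (Re z) <= a /\ Rabs (Im z) <= b.

Definition affine_image (lam c : C) (E : C -> Prop) (w : C) : Prop :=
  exists z : C, E z /\ w = Cplus (Cmult lam z) c.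

Definition Omega (lam : C) : Prop :=
  Cmod lam < 1 /\ 0 <= Re lam /\ Re lam <= (Cmod lam) ^ 2 - / 2.

(* Main.v *)
Require Import Defs.
From Stdlib Require Import Reals Lra Psatz.
From Coquelicot Require Import Coquelicot.
Open Scope R_scope.

Lemma core (x y u v : R) : 0 <= x -> 0 < y -> / 2 <= x^2+y^2 - x -> x^2+y^2 < 1 ->
  Rabs u <= (2*(x^2+y^2) - x)/(x^2+y^2) -> Rabs v <= y/(x^2+y^2) -> v*x - u*y <= 0 ->
  Rabs (((u-1)*x+v*y)/(x^2+y^2)) <= (2*(x^2+y^2) - x)/(x^2+y^2) /\
  Rabs ((v*x-(u-1)*y)/(x^2+y^2)) <= y/(x^2+y^2).
Proof.
  intros hx hy hs hr hu hv hc.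
  set (r2 := x^2+y^2) in *.
  assert (r2p : 0 < r2) by (unfold r2; nra).
  apply Rabs_le_between in hu. apply Rabs_le_between in hv.
  assert (hu1 : u * r2 <= 2*r2 - x).
  { destruct hu as [_ h]. apply (Rmult_le_compat_r r2) in h; [|lra].
    unfold Rdiv in h. rewrite Rmult_assoc, Rinv_l in h; lra. }
  assert (hu2 : -(2*r2 - x) <= u * r2).
  { destruct hu as [h _]. apply (Rmult_le_compat_r r2) in h; [|lra].
    unfold Rdiv in h. rewrite Ropp_mult_distr_l_reverse, Rmult_assoc, Rinv_l in h; lra. }
  assert (hv1 : v * r2 <= y).
  { destruct hv as [_ h]. apply (Rmult_le_compat_r r2) in h; [|lra].
    unfold Rdiv in h. rewrite Rmult_assoc, Rinv_l in h; lra. }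
  assert (hv2 : -y <= v * r2).
  { destruct hv as [h _]. apply (Rmult_le_compat_r r2) in h; [|lra].
    unfold Rdiv in h. rewrite Ropp_mult_distr_l_reverse, Rmult_assoc, Rinv_l in h; lra. }
  assert (key : y^2 <= r2^2 + (r2 - x)^2) by (unfold r2 in *; nra).
  assert (ir : 0 < / r2) by (apply Rinv_0_lt_compat; lra).
  assert (D : forall t c, t <= c -> t / r2 <= c / r2).
  { intros t c h. unfold Rdiv. apply Rmult_le_compat_r; lra. }
  assert (N : forall c, - (c / r2) = (- c) / r2) by (intros; field; lra).
  split; apply Rabs_le_between; rewrite N; split; apply D.
  - assert (h1 : x*(v*x-u*y) <= 0) by nra.
    assert (h2 : y * (-(u*x) - v*y) <= y * 1) by (unfold r2 in *; nra).
    apply Rmult_le_reg_l in h2; [|lra]. lra.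
  - nra.
  - nra.
  - nra.
Qed.

Lemma cover1 (x y u v : R) : 0 <= x -> y <> 0 -> / 2 <= x^2+y^2 - x -> x^2+y^2 < 1 ->
  Rabs u <= (2*(x^2+y^2) - x)/(x^2+y^2) -> Rabs v <= Rabs y/(x^2+y^2) -> y * (v*x - u*y) <= 0 ->
  Rabs (((u-1)*x+v*y)/(x^2+y^2)) <= (2*(x^2+y^2) - x)/(x^2+y^2) /\
  Rabs ((v*x-(u-1)*y)/(x^2+y^2)) <= Rabs y/(x^2+y^2).
Proof.
  intros hx hy hs hr hu hv hc.
  destruct (Rlt_or_le 0 y) as [yp|yn].
  - rewrite (Rabs_pos_eq y) in hv |- * by lra. apply core; try lra.
    destruct (Rle_or_lt (v*x - u*y) 0); [lra|]. nra.
  - assert (yn' : y < 0) by lra. rewrite (Rabs_left y) in hv |- * by lra.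
    assert (E : x^2+y^2 = x^2+(-y)^2) by ring. rewrite E in *.
    destruct (core x (-y) u (-v)) as [h1 h2]; try lra.
    + rewrite Rabs_Ropp; exact hv.
    + destruct (Rle_or_lt ((-v)*x - u*(-y)) 0); [lra|]. nra.
    + split.
      * replace ((u - 1) * x + v * y) with ((u - 1) * x + - v * - y) by ring. exact h1.
      * replace ((v * x - (u - 1) * y) / (x ^ 2 + (- y) ^ 2))
          with (- ((- v * x - (u - 1) * - y) / (x ^ 2 + (- y) ^ 2))) by (field; nra).
        rewrite Rabs_Ropp. exact h2.
Qed.

Theorem mainTheorem12 :
  forall lam : C, Omega lam ->
  exists a b : R, 1 < a /\ / sqrt 2 < b /\
    (forall z : C, rect a b z ->
       affine_image lam (RtoC (-1)) (rect a b) z \/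
       affine_image lam (RtoC 1) (rect a b) z).
Proof.
  intros [x y] [hm [hx hs]]. simpl in hx, hs.
  unfold Cmod in hm, hs. simpl in hm, hs.
  assert (r2nn : 0 <= x^2+y^2) by nra.
  assert (E : x ^ 2 + (y ^ 2) = (x^2+y^2)) by ring.
  replace (x * (x * 1) + y * (y * 1)) with (x^2+y^2) in * by ring.
  rewrite Rmult_1_r, sqrt_sqrt in hs by exact r2nn.
  assert (hr : x^2+y^2 < 1).
  { assert (sqrt (x^2+y^2) < sqrt 1) by (rewrite sqrt_1; exact hm).
    apply sqrt_lt_0_alt in H. exact H. }
  set (r2 := x^2+y^2) in *.
  assert (y2 : / 2 <= y^2) by (unfold r2 in *; nra).
  assert (hy : y <> 0) by (intro; subst; nra).
  assert (r2p : 0 < r2) by (unfold r2; nra).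
  exists ((2*r2 - x)/r2), (Rabs y / r2). split; [|split].
  - apply (Rmult_lt_reg_r r2); [lra|]. unfold Rdiv. rewrite Rmult_assoc, Rinv_l; lra.
  - assert (ay : / sqrt 2 <= Rabs y).
    { rewrite <- (sqrt_pow2 (Rabs y)) by apply Rabs_pos.
      rewrite <- sqrt_inv. apply sqrt_le_1_alt. rewrite RPow_abs, (Rabs_pos_eq (y^2)) by nra. lra. }
    assert (Rabs y < Rabs y / r2).
    { apply (Rmult_lt_reg_r r2); [lra|]. unfold Rdiv. rewrite Rmult_assoc, Rinv_l by lra.
      assert (0 < Rabs y) by (apply Rabs_pos_lt; exact hy). nra. }
    lra.
  - intros [u v] [hu hv]. simpl in hu, hv.
    destruct (Rle_or_lt (y * (v*x - u*y)) 0) as [c|c].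
    + right. destruct (cover1 x y u v) as [h1 h2]; try (unfold r2 in *; lra).
      exists (((u-1)*x+v*y)/r2, (v*x-(u-1)*y)/r2). split.
      * split; simpl; assumption.
      * unfold Cplus, Cmult, RtoC; simpl. unfold r2 in *. f_equal; field; lra.
    + left. destruct (cover1 x y (-u) (-v)) as [h1 h2]; try (unfold r2 in *; lra).
      * rewrite Rabs_Ropp; exact hu.
      * rewrite Rabs_Ropp; exact hv.
      * exists (-(((-u-1)*x+(-v)*y)/r2), -(((-v)*x-(-u-1)*y)/r2)). split.
        -- split; simpl; rewrite Rabs_Ropp; assumption.
        -- unfold Cplus, Cmult, RtoC; simpl. unfold r2 in *. f_equal; field; lra.
Qed.
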